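(* Let $g:\{0,1\}^N\to\{0,1\}$ be a total Boolean function. If $g$ can be computed by an $R$-round randomized AMPC algorithm with I/O capacity $S$ and error at most $1/3$, then the approximate degree of $g$ is at most $S^{2R}$.
   Context: AMPC model with I/O capacity $S$: computation proceeds in rounds communicating through distributed data stores (DDS) $\mathcal{D}_0,\dots,\mathcal{D}_R$, each storing under each key a multiset of values (possibly empty; duplicates allowed, each value written by a unique machine). On input $x\in\{0,1\}^N$, $\mathcal{D}_0$ consists of the pairs $(i,x_i)$, $i=1,\dots,N$. In round $r\ge1$ each machine (arbitrarily many, computationally unbounded, deterministic) adaptively queries keys of $\mathcal{D}_{r-1}$, receiving the whole multiset under the key, with later queries depending arbitrarily on earlier queries and responses; the total number of values in all responses plus the number of empty-response queries is at most $S$; it then writes at most $S$ key-value pairs to $\mathcal{D}_r$ as an arbitrary function of its queries and responses. In every round, on every input, at most $S$ values are written under any single key (a machine exceeding its budget stops querying and writes nothing). A deterministic algorithm computes $g$ in $R$ rounds if for every valid input $x$, $\mathcal{D}_R$ contains exactly the single pair $(\textsc{answer},g(x))$. A randomized AMPC algorithm is a probability distribution over deterministic AMPC algorithms; its number of rounds is the maximum over the support; it computes $g$ with error at most $\delta$ if for each valid input $x$ it outputs $g(x)$ (i.e. $\mathcal{D}_R$ is exactly $\{(\textsc{answer},g(x))\}$) with probability at least $1-\delta$. A polynomial $p$ approximately represents $g$ if $|p(x)-g(x)|\le 1/3$ for all $x\in\{0,1\}^N$; the approximate degree $\widetilde{\deg}(g)$ is the minimum degree of such a $p$. *)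

(* Defs.v *)
From HB Require Import structures.
From mathcomp Require Import all_boot all_order all_algebra.
From mathcomp Require Import mpoly.
From mathcomp Require Import all_classical all_reals all_analysis.
Set Implicit Arguments. Unset Strict Implicit. Unset Printing Implicit Defensive.
Import Order.TTheory GRing.Theory Num.Theory.

(* Keys and values are natural numbers (any finitary data can be encoded).  *)
(* A DDS maps each key to the multiset of values stored under it; a         *)
(* multiset of nats is represented canonically by its sorted list.          *)

Definition dds := nat -> seq nat.

Definition history := seq (nat * seq nat).

(* A deterministic machine: adaptive query strategy (None = stop querying)
   and the key-value pairs it writes, as a function of its history. *)
Record machine := Machine {
  mquery : history -> option nat;
  mwrite : history -> seq (nat * nat)
}.

Definition round_prog := seq machine.
Definition det_alg := seq round_prog.

Definition ANSWER : nat := 0.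

Definition query_cost (r : seq nat) : nat := maxn 1 (size r).

(* Since each query costs >= 1, fuel S.+1 is never exhausted. *)
Fixpoint run_queries (q : history -> option nat) (D : dds) (S : nat)
    (fuel c : nat) (h : history) : option history :=
  match fuel with
  | 0 => None
  | fuel'.+1 =>
    match q h with
    | None => Some h
    | Some k =>
        let r := D k in
        let c' := c + query_cost r in
        if c' <= S then run_queries q D S fuel' c' (rcons h (k, r)) else None
    end
  end.

Definition machine_writes (S : nat) (D : dds) (M : machine) : seq (nat * nat) :=
  match run_queries (mquery M) D S S.+1 0 [::] with
  | Some h => take S (mwrite M h)
  | None => [::]
  end.

Definition dds_of (ws : seq (nat * nat)) : dds :=
  fun k => sort leq [seq p.2 | p <- ws & p.1 == k].

Definition round_step (S : nat) (rp : round_prog) (D : dds) : dds :=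
  dds_of (flatten [seq machine_writes S D M | M <- rp]).

Definition input_dds (N : nat) (x : 'I_N -> bool) : dds :=
  fun k => match k with
           | 0 => [::]
           | k'.+1 => if (insub k' : option 'I_N) is Some i
                      then [:: nat_of_bool (x i)] else [::]
           end.

Definition dds_after (S N : nat) (A : det_alg) (x : 'I_N -> bool) (r : nat) : dds :=
  foldl (fun D rp => round_step S rp D) (input_dds x) (take r A).

Definition final_dds (S N : nat) (A : det_alg) (x : 'I_N -> bool) : dds :=
  dds_after S A x (size A).

Definition valid_alg (S N : nat) (A : det_alg) : Prop :=
  forall (x : 'I_N -> bool) (r : nat), 0 < r <= size A ->
    forall k : nat, size (dds_after S A x r k) <= S.

Definition outputs (S N : nat) (A : det_alg) (x : 'I_N -> bool) (b : bool) : Prop :=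
  forall k : nat,
    final_dds S A x k = if k == ANSWER then [:: nat_of_bool b] else [::].

(* A randomized AMPC algorithm: a probability distribution over deterministic
   algorithms, given as a random variable  alg : Omega -> det_alg  on a
   probability space (Omega, P). *)
Definition rand_alg_rounds {d : measure_display} {Omega : measurableType d}
    (alg : Omega -> det_alg) (R : nat) : Prop :=
  (forall w, size (alg w) <= R) /\ (exists w, size (alg w) = R).

Definition rand_computes {R : realType} {d : measure_display}
    {Omega : measurableType d} (P : probability Omega R)
    (S N : nat) (alg : Omega -> det_alg) (g : ('I_N -> bool) -> bool)
    (delta : R) : Prop :=
  (forall w, valid_alg S N (alg w)) /\
  forall x : 'I_N -> bool,
    let E := [set w : Omega | outputs S (alg w) x (g x)]%classic in
    measurable E /\ (P E >= (1 - delta)%:E)%E.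

(* degree of p, and msize 0 = 0.)                                           *)

Definition approx_represents {R : realType} (N : nat) (p : {mpoly R[N]})
    (g : ('I_N -> bool) -> bool) : Prop :=
  forall x : 'I_N -> bool,
    (`| p.@[fun i => (x i)%:R] - (g x)%:R | <= (3^-1 : R))%R.

Definition approx_deg_le (R : realType) (N : nat)
    (g : ('I_N -> bool) -> bool) (D : nat) : Prop :=
  exists p : {mpoly R[N]}, (msize p <= D.+1)%N /\ approx_represents p g.

(* Main.v *)
Require Import Defs.
From HB Require Import structures.
From mathcomp Require Import all_boot all_order all_algebra.
From mathcomp Require Import mpoly.
From mathcomp Require Import all_classical all_reals all_analysis.
From mathcomp Require Import zify ring lra.
From Stdlib Require Import Lia.
Import Order.TTheory GRing.Theory Num.Theory.

Module PartA.
Set Implicit Arguments. Unset Strict Implicit. Unset Printing Implicit Defensive.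
Local Open Scope ring_scope.

Section Deg.
Variables (R : realType) (N : nat).
Local Notation X := ('I_N -> bool).

Definition ev (x : X) : 'I_N -> R := fun i => (x i)%:R.

Definition degle (D : nat) (f : X -> R) : Prop :=
  exists p : {mpoly R[N]}, (msize p <= D.+1)%N /\ forall x, p.@[ev x] = f x.

Lemma degle_mono D D' f : (D <= D')%N -> degle D f -> degle D' f.
Proof. by move=> h [p [hp e]]; exists p; split=> //; apply: leq_trans hp _. Qed.

Lemma degle_const D c : degle D (fun _ => c).
Proof.
exists c%:MP; split=> [|x]; last by rewrite mevalC.
by rewrite msizeC; case: (c != 0).
Qed.

Lemma degle_var i : degle 1 (fun x => (x i)%:R).
Proof.
exists 'X_i; split=> [|x]; last by rewrite mevalXU.
by rewrite msizeX mdeg1.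
Qed.

Lemma degle_add D f g : degle D f -> degle D g -> degle D (fun x => f x + g x).
Proof.
move=> [p [hp ep]] [q [hq eq]]; exists (p + q); split=> [|x].
  by apply: leq_trans (msizeD_le _ _) _; rewrite geq_max hp hq.
by rewrite mevalD ep eq.
Qed.

Lemma degle_scale D c f : degle D f -> degle D (fun x => c * f x).
Proof.
move=> [p [hp ep]]; exists (c *: p); split=> [|x].
  by apply: leq_trans (msizeZ_le _ _) _.
by rewrite mevalZ ep.
Qed.

Lemma degle_mul a b f g : degle a f -> degle b g -> degle (a + b) (fun x => f x * g x).
Proof.
move=> [p [hp ep]] [q [hq eq]]; exists (p * q); split=> [|x]; last by rewrite mevalM ep eq.
have [->|nzp] := eqVneq p 0; first by rewrite mul0r msize0.
have [->|nzq] := eqVneq q 0; first by rewrite mulr0 msize0.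
rewrite msizeM //.
have h1 : (0 < msize p)%N by rewrite lt0n msize_poly_eq0.
have h2 : (0 < msize q)%N by rewrite lt0n msize_poly_eq0.
rewrite -ltnS prednK; last by rewrite addn_gt0 h1.
by rewrite -addnS -addSn leq_add.
Qed.

Lemma degle_ext D f g : f =1 g -> degle D f -> degle D g.
Proof. by move=> e [p [hp ep]]; exists p; split=> // x; rewrite ep e. Qed.

Lemma degle_sum D (I : eqType) (r : seq I) (F : I -> X -> R) :
  (forall i, i \in r -> degle D (F i)) -> degle D (fun x => \sum_(i <- r) F i x).
Proof.
elim: r => [|i r IH] h.
  by apply: (degle_ext (f := fun _ => 0)) => [x|]; [rewrite big_nil | apply: degle_const].
apply: (degle_ext (f := fun x => F i x + \sum_(j <- r) F j x)) => [x|]; first by rewrite big_cons.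
apply: degle_add; first by apply: h; rewrite mem_head.
by apply: IH => j hj; apply: h; rewrite in_cons hj orbT.
Qed.

Lemma degle_prod (I : eqType) (r : seq I) (F : I -> X -> R) (d : I -> nat) :
  (forall i, i \in r -> degle (d i) (F i)) ->
  degle (\sum_(i <- r) d i)%N (fun x => \prod_(i <- r) F i x).
Proof.
elim: r => [|i r IH] h.
  by rewrite big_nil; apply: (degle_ext (f := fun _ => 1)) => [x|]; [rewrite big_nil | apply: degle_const].
rewrite big_cons; apply: (degle_ext (f := fun x => F i x * \prod_(j <- r) F j x)) => [x|]; first by rewrite big_cons.
apply: degle_mul; first by apply: h; rewrite mem_head.
by apply: IH => j hj; apply: h; rewrite in_cons hj orbT.
Qed.

Lemma degle_sumT D (I : Type) (r : seq I) (F : I -> X -> R) :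
  (forall i, degle D (F i)) -> degle D (fun x => \sum_(i <- r) F i x).
Proof.
move=> h; elim: r => [|i r IH].
  by apply: (degle_ext (f := fun _ => 0)) => [x|]; [rewrite big_nil | apply: degle_const].
apply: (degle_ext (f := fun x => F i x + \sum_(j <- r) F j x)) => [x|]; first by rewrite big_cons.
by apply: degle_add.
Qed.

End Deg.

End PartA.
Import PartA.

Module PartB.
Set Implicit Arguments. Unset Strict Implicit. Unset Printing Implicit Defensive.
Local Open Scope ring_scope.

Section Ind.
Variables (R : realType) (N : nat).
Local Notation X := ('I_N -> bool).
Local Notation degle := (@degle R N).

Definition rng (T : eqType) (F : X -> T) : seq T :=
  undup [seq F (fun i => y i) | y : {ffun 'I_N -> bool}].

Lemma ffun_of_x (x : X) : (fun i => [ffun i => x i] i) = x.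
Proof. by apply: funext => i; rewrite ffunE. Qed.

Lemma mem_rng (T : eqType) (F : X -> T) x : F x \in rng F.
Proof.
rewrite /rng mem_undup -{1}(ffun_of_x x).
by apply: (map_f (fun y : {ffun 'I_N -> bool} => F (fun i => y i))); rewrite mem_enum.
Qed.

Lemma sum_rng (T : eqType) (F : X -> T) x (H : T -> R) :
  \sum_(t <- rng F) (F x == t)%:R * H t = H (F x).
Proof.
rewrite (bigD1_seq (F x)) ?mem_rng ?undup_uniq //= eqxx mul1r big1 ?addr0 //.
by move=> t; rewrite eq_sym => /negbTE ->; rewrite mul0r.
Qed.

Definition inddeg (T : eqType) (D : nat) (F : X -> T) :=
  forall t, degle D (fun x => (F x == t)%:R).

Lemma inddeg_mono (T : eqType) a b (F : X -> T) : (a <= b)%N -> inddeg a F -> inddeg b F.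
Proof. by move=> h H t; apply: degle_mono h (H t). Qed.

Lemma inddeg_const (T : eqType) D (c : T) : inddeg D (fun _ : X => c).
Proof. by move=> t; apply: degle_const. Qed.

Lemma degle_ind (T : eqType) a (F : X -> T) (phi : T -> X -> R) b :
  inddeg a F -> (forall t, degle b (phi t)) -> degle (a + b) (fun x => phi (F x) x).
Proof.
move=> hF hphi.
apply: (degle_ext (f := fun x => \sum_(t <- rng F) (F x == t)%:R * phi t x)).
  by move=> x; rewrite (sum_rng F x (fun t => phi t x)).
by apply: degle_sum => t _; apply: degle_mul.
Qed.

Lemma inddeg_bind (T U : eqType) a b (F : X -> T) (G : T -> X -> U) :
  inddeg a F -> (forall t, inddeg b (G t)) -> inddeg (a + b) (fun x => G (F x) x).
Proof. by move=> hF hG u; exact: (degle_ind (phi := fun t x => (G t x == u)%:R) hF (fun t => hG t u)). Qed.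

Lemma inddeg_comp (T U : eqType) a (F : X -> T) (h : T -> U) :
  inddeg a F -> inddeg a (fun x => h (F x)).
Proof.
move=> hF; rewrite -[a]addn0.
by apply: (inddeg_bind (G := fun t _ => h t)) => // t; apply: inddeg_const.
Qed.

Lemma degle_comp (T : eqType) a (F : X -> T) (phi : T -> R) :
  inddeg a F -> degle a (fun x => phi (F x)).
Proof.
move=> hF; rewrite -[a]addn0.
by apply: (degle_ind (phi := fun t _ => phi t)) => // t; apply: degle_const.
Qed.

End Ind.

End PartB.
Import PartB.

Module PartC.
Set Implicit Arguments. Unset Strict Implicit. Unset Printing Implicit Defensive.
Local Open Scope ring_scope.

Section Run.
Variables (R : realType) (N : nat).
Local Notation X := ('I_N -> bool).
Local Notation inddeg := (@inddeg R N).
Variables (D : X -> dds) (d : nat).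
Hypothesis hD : forall k, inddeg d (fun x => D x k).

Lemma query_cost_gt0 r : (0 < query_cost r)%N.
Proof. by rewrite /query_cost leq_max. Qed.

Lemma run_ind q S fuel c h :
  inddeg ((S - c) * d) (fun x => run_queries q (D x) S fuel c h).
Proof.
elim: fuel c h => [|fuel IH] c h /=; first exact: inddeg_const.
case: (q h) => [k|]; last exact: inddeg_const.
case: (leqP S c) => hc.
  have -> : (fun x => if (c + query_cost (D x k) <= S)%N
               then run_queries q (D x) S fuel (c + query_cost (D x k)) (rcons h (k, D x k))
               else None) = fun _ => None.
    apply: funext => x; case: ifP => // h1; exfalso.
    have := query_cost_gt0 (D x k); move: h1 hc; lia.
  exact: inddeg_const.
apply: (@inddeg_mono _ _ _ (d + (S - c - 1) * d)).
  have -> : (S - c = (S - c - 1).+1)%N by lia.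
  by rewrite mulSn subn1 /=.
apply: (inddeg_bind (F := fun x => D x k)
   (G := fun r x => if (c + query_cost r <= S)%N
               then run_queries q (D x) S fuel (c + query_cost r) (rcons h (k, r))
               else None)) => // r.
case h1: (c + query_cost r <= S)%N; last exact: inddeg_const.
apply: inddeg_mono (IH _ _); apply: leq_mul => //.
have := query_cost_gt0 r; lia.
Qed.

End Run.

End PartC.
Import PartC.

Module PartD.
Set Implicit Arguments. Unset Strict Implicit. Unset Printing Implicit Defensive.

Lemma bin_mul n j l : (l <= j)%N -> (j <= n)%N ->
  ('C(n, j) * 'C(j, l) = 'C(n, l) * 'C(n - l, j - l))%N.
Proof.
move=> hlj hjn.
have hpos : (0 < l`! * (j - l)`! * (n - j)`!)%N by rewrite !muln_gt0 !fact_gt0.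
apply/eqP; rewrite -(eqn_pmul2r hpos); apply/eqP.
have e1 : ('C(n, j) * 'C(j, l) * (l`! * (j - l)`! * (n - j)`!) =
           ('C(j, l) * (l`! * (j - l)`!)) * 'C(n, j) * (n - j)`!)%N by ring.
have e2 : ('C(n, l) * 'C(n - l, j - l) * (l`! * (j - l)`! * (n - j)`!) =
           'C(n, l) * l`! * ('C(n - l, j - l) * ((j - l)`! * (n - j)`!)))%N by ring.
rewrite e1 e2 (bin_fact hlj) [(j`! * _)%N]mulnC -mulnA (bin_fact hjn).
have -> : (n - j = (n - l) - (j - l))%N by lia.
have h1 : (j - l <= n - l)%N by lia.
have h2 : (l <= n)%N by lia.
by rewrite (bin_fact h1) -mulnA (bin_fact h2).
Qed.

Local Open Scope ring_scope.

Lemma alt_sum (R : realType) m :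
  \sum_(i < m.+1) (-1) ^+ i * ('C(m, i))%:R = (m == 0%N)%:R :> R.
Proof.
have := exprD1n (-1 : R) m; rewrite addNr expr0n => ->.
by apply: eq_bigr => i _; rewrite mulr_natr.
Qed.

Lemma alt_bin (R : realType) l n K : (n < K)%N ->
  \sum_(j < K) (-1) ^+ (j - l) * ('C(j, l))%:R * ('C(n, j))%:R = (n == l)%:R :> R.
Proof.
move=> hnK.
rewrite -(big_mkord xpredT (fun j => (-1) ^+ (j - l) * ('C(j, l))%:R * ('C(n, j))%:R : R)).
rewrite (big_cat_nat (n := n.+1)) //=.
rewrite [X in _ + X]big1_seq ?addr0; last first.
  move=> j /andP [_]; rewrite mem_index_iota => /andP [h1 _]; by rewrite (bin_small h1) ?mulr0.
case: (leqP l n) => hln; last first.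
  rewrite big_nat_cond big1; last first.
    move=> j /andP [/andP [_ h2] _]; rewrite (@bin_small j l) ?mulr0 ?mul0r //.
    by apply: leq_trans hln.
  by rewrite (ltn_eqF hln).
rewrite (big_cat_nat (n := l)) //=.
rewrite [X in X + _]big_nat_cond [X in X + _]big1 ?add0r; last first.
  by move=> j /andP [/andP [_ h2] _]; rewrite (@bin_small j l h2) ?mulr0 ?mul0r.
rewrite -{1}[l]add0n big_addn.
have -> : (n.+1 - l = (n - l).+1)%N by lia.
transitivity (('C(n, l))%:R * \sum_(0 <= i < (n - l).+1) (-1) ^+ i * ('C(n - l, i))%:R : R).
  rewrite big_distrr /=; apply: eq_big_nat => i /andP [_ hi].
  have -> : (i + l - l = i)%N by lia.
  have hb : (l <= i + l)%N by lia.
  have hb2 : (i + l <= n)%N by lia.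
  rewrite -mulrA -natrM mulnC (bin_mul hb hb2) addnK natrM.
  by rewrite mulrCA.
rewrite big_mkord alt_sum subn_eq0.
case: (eqVneq n l) => [->|hne]; first by rewrite leqnn binn mul1r.
have -> : (n <= l)%N = false by apply/negbTE; rewrite -ltnNge ltn_neqAle eq_sym hne hln.
by rewrite mulr0.
lia.
Qed.

End PartD.
Import PartD.

Module PartE.
Set Implicit Arguments. Unset Strict Implicit. Unset Printing Implicit Defensive.
Local Open Scope ring_scope.

Lemma sum_count_uniq (s t : seq nat) : uniq s ->
  (\sum_(v <- s) count_mem v t = count (mem s) t)%N.
Proof.
elim: s => [|a s IH] /=; first by rewrite big_nil count_pred0.
move=> /andP [has us]; rewrite big_cons IH //.
have := count_predUI (pred1 a) (mem s) t.
rewrite (@eq_count _ (predI (pred1 a) (mem s)) pred0); last first.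
  by move=> y /=; case: (eqVneq y a) => // ->; rewrite (negbTE has).
rewrite count_pred0 addn0 => <-.
by apply: eq_count => y /=; rewrite in_cons.
Qed.

Lemma sum_count_le (s t : seq nat) : uniq s ->
  (\sum_(i < size s) count_mem (nth 0%N s i) t <= size t)%N.
Proof.
move=> us.
rewrite -(big_mkord xpredT (fun i => count_mem (nth 0%N s i) t)) -(big_nth 0%N xpredT (fun v => count_mem v t)).
by rewrite sum_count_uniq // count_size.
Qed.

Section Core.
Variables (R : realType) (N : nat).
Local Notation X := ('I_N -> bool).
Local Notation degle := (@degle R N).
Local Notation inddeg := (@inddeg R N).

Lemma natr_ffact (m j : nat) :
  ((m ^_ j)%:R : R) = \prod_(i < j) (m%:R - i%:R).
Proof.
case: (leqP j m) => hjm.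
  rewrite ffact_prod natr_prod; apply: eq_bigr => i _.
  by rewrite natrB //; apply: leq_trans (ltnW (ltn_ord i)) hjm.
rewrite ffact_small //.
rewrite (bigD1 (Ordinal hjm)) //= subrr mul0r //.
Qed.

Lemma degle_binom e (n : X -> nat) j :
  degle e (fun x => (n x)%:R) -> degle (j * e) (fun x => ('C(n x, j))%:R).
Proof.
move=> hn.
apply: (degle_ext (f := fun x => (j`!%:R)^-1 * \prod_(i < j) ((n x)%:R - i%:R))).
  move=> x; rewrite -natr_ffact -bin_ffact natrM mulrC mulfK //.
apply: degle_scale.
have -> : (j * e = \sum_(i < j) e)%N by rewrite sum_nat_const card_ord.
apply: degle_prod => i _.
apply: (degle_ext (f := fun x => (n x)%:R + (- i%:R))) => //.
apply: degle_add => //; exact: degle_const.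
Qed.


Lemma natr_forall (I : finType) (P : pred I) :
  ([forall i, P i])%:R = \prod_i (P i)%:R :> R.
Proof.
case: (boolP [forall i, P i]) => [/forallP h|].
  by rewrite big1 // => i _; rewrite h.
rewrite negb_forall => /existsP [i hi].
by rewrite (bigD1 i) //= (negbTE hi) mul0r.
Qed.

Lemma core (C : X -> seq nat) S e :
  (forall x, sorted leq (C x)) -> (forall x, size (C x) <= S)%N ->
  (forall v, degle e (fun x => (count_mem v (C x))%:R)) -> inddeg (S * e) C.
Proof.
move=> hs hsz hc L.
pose Vs := undup (L ++ flatten (rng C)).
pose m := size Vs.
pose n (i : 'I_m) x := count_mem (nth 0%N Vs i) (C x).
pose l (i : 'I_m) := count_mem (nth 0%N Vs i) L.
pose a (i : 'I_m) (j : 'I_S.+1) : R := (-1) ^+ (j - l i) * ('C(j, l i))%:R.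
have inVs : forall x v, v \in C x ++ L -> v \in Vs.
  move=> x v; rewrite mem_cat mem_undup mem_cat => /orP [h|->]; last by [].
  apply/orP; right; apply/flattenP; exists (C x) => //; exact: mem_rng.
have key : forall x, (C x == L) = sorted leq L && [forall i : 'I_m, n i x == l i].
  move=> x; apply/idP/andP => [/eqP eC|[sL /forallP H]].
    by split; [rewrite -eC | apply/forallP => i; rewrite /n /l eC].
  apply/eqP; apply: (sorted_eq leq_trans anti_leq) => //.
  apply/allP => v hv /=.
  have hi : (index v Vs < m)%N by rewrite index_mem; apply: inVs hv.
  have := H (Ordinal hi); rewrite /n /l /= nth_index //; apply: inVs hv.
have main : forall x, (C x == L)%:R = \sum_(T : {ffun 'I_m -> 'I_S.+1})
     ((sorted leq L)%:R * \prod_i a i (T i)) * \prod_i ('C(n i x, T i))%:R :> R.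
  move=> x; rewrite key -mulnb natrM natr_forall.
  transitivity ((sorted leq L)%:R * \prod_i \sum_(j < S.+1) a i j * ('C(n i x, j))%:R : R).
    congr (_ * _); apply: eq_bigr => i _.
    rewrite -(@alt_bin R (l i) (n i x) S.+1) //.
    by rewrite ltnS; apply: leq_trans (count_size _ _) (hsz x).
  rewrite bigA_distr_bigA big_distrr /=; apply: eq_bigr => T _.
  by rewrite big_split /= mulrA.
apply: (degle_ext (f := fun x => \sum_(T : {ffun 'I_m -> 'I_S.+1})
     ((sorted leq L)%:R * \prod_i a i (T i)) * \prod_i ('C(n i x, T i))%:R)).
  by move=> x; rewrite main.
apply: degle_sum => T _; apply: degle_scale.
case: (leqP (\sum_i (T i : nat)) S)%N => hT.
  apply: (@degle_mono _ _ (\sum_i (T i * e))%N).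
    by rewrite -big_distrl /= leq_mul2r hT orbT.
  apply: degle_prod => i _; apply: degle_binom; exact: hc.
apply: (degle_ext (f := fun _ => 0)); last exact: degle_const.
move=> x; symmetry.
have [i hi] : exists i, (n i x < T i)%N.
  apply/existsP; rewrite -[X in is_true X]negbK negb_exists; apply/negP => /forallP H.
  have : (\sum_i (T i : nat) <= \sum_(i < m) n i x)%N.
    by apply: leq_sum => i _; have := H i; rewrite -leqNgt.
  move=> /leq_trans /(_ (sum_count_le (C x) (undup_uniq _))) /leq_trans /(_ (hsz x)).
  by rewrite leqNgt hT.
by rewrite (bigD1 i) //= bin_small // mul0r.
Qed.

End Core.

End PartE.
Import PartE.

Module PartF.
Set Implicit Arguments. Unset Strict Implicit. Unset Printing Implicit Defensive.
Local Open Scope ring_scope.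

Section Step.
Variables (R : realType) (N : nat).
Local Notation X := ('I_N -> bool).
Local Notation degle := (@degle R N).
Local Notation inddeg := (@inddeg R N).

Lemma writes_ind (D : X -> dds) d S M :
  (forall k, inddeg d (fun x => D x k)) ->
  inddeg (S * d) (fun x => machine_writes S (D x) M).
Proof.
move=> hD; rewrite /machine_writes.
have := run_ind hD (mquery M) S S.+1 0 [::]; rewrite subn0 => hr.
exact: (@inddeg_comp R N _ _ _ _ (fun o => match o with Some h => take S (mwrite M h) | None => [::] end) hr).
Qed.

Lemma step_ind (D : X -> dds) d S rp :
  (forall k, inddeg d (fun x => D x k)) ->
  (forall x k, size (round_step S rp (D x) k) <= S)%N ->
  forall k, inddeg (S * (S * d)) (fun x => round_step S rp (D x) k).
Proof.
move=> hD hsz k.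
apply: core => //.
  by move=> x; rewrite /round_step /dds_of; apply: sort_sorted; exact: leq_total.
move=> v.
pose P := (fun p : nat * nat => (p.1 == k) && (p.2 == v)).
apply: (degle_ext (f := fun x => \sum_(M <- rp) (count P (machine_writes S (D x) M))%:R)).
  move=> x; rewrite /round_step /dds_of.
  rewrite (permP (permEl (perm_sort leq _))) count_map count_filter count_flatten sumnE big_map natr_sum.
  rewrite big_map; apply: eq_bigr => M _; congr (_ %:R); apply: eq_count => p /=; by rewrite andbC.
apply: degle_sumT => M.
exact: (@degle_comp R N _ _ _ (fun ws : seq (nat * nat) => (count P ws)%:R : R) (writes_ind S M hD)).
Qed.

End Step.

End PartF.
Import PartF.

Module PartG.
Set Implicit Arguments. Unset Strict Implicit. Unset Printing Implicit Defensive.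
Local Open Scope ring_scope.

Section Alg.
Variables (R : realType) (N : nat).
Local Notation X := ('I_N -> bool).
Local Notation degle := (@degle R N).
Local Notation inddeg := (@inddeg R N).

Lemma bit_ind (i : 'I_N) : inddeg 1 (fun x : X => x i).
Proof.
move=> b.
apply: (degle_ext (f := fun x => if b then (x i)%:R else 1 + (- 1) * (x i)%:R)).
  by move=> x; case: b; case: (x i) => //=; rewrite mulN1r ?subrr ?subr0.
case: b; first exact: degle_var.
by apply: degle_add; [exact: degle_const | apply: degle_scale; exact: degle_var].
Qed.

Lemma input_ind k : inddeg 1 (fun x : X => input_dds x k).
Proof.
rewrite /input_dds; case: k => [|k]; first exact: inddeg_const.
case: (insub k : option 'I_N) => [i|]; last exact: inddeg_const.
exact: (@inddeg_comp R N _ _ _ _ (fun b : bool => [:: nat_of_bool b]) (bit_ind i)).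
Qed.

Lemma alg_ind S (A : det_alg) : valid_alg S N A ->
  forall r, (r <= size A)%N -> forall k, inddeg (S ^ (2 * r)) (fun x => dds_after S A x r k).
Proof.
move=> hv; elim=> [|r IH] hr k.
  by rewrite muln0 expn0 /dds_after take0 /=; exact: input_ind.
have hrA : (r < size A)%N by [].
have e : forall x : X, dds_after S A x r.+1 = round_step S (nth [::] A r) (dds_after S A x r).
  by move=> x; rewrite /dds_after (take_nth [::] hrA) foldl_rcons.
have -> : (S ^ (2 * r.+1) = S * (S * S ^ (2 * r)))%N by rewrite mulnS !expnS.
under eq_fun do rewrite e.
apply: step_ind; first by move=> k'; apply: IH; apply: ltnW.
by move=> x k'; rewrite -e; apply: hv; rewrite hr.
Qed.

Lemma final_degle S (A : det_alg) nR : valid_alg S N A -> (size A <= nR)%N ->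
  degle (S ^ (2 * nR)) (fun x => ((final_dds S A x ANSWER == [:: 1%N]) : nat)%:R).
Proof.
move=> hv hs.
case hA: (size A) => [|a].
  apply: (degle_ext (f := fun _ => 0)); last exact: degle_const.
  by move=> x; rewrite /final_dds hA /dds_after take0.
have := alg_ind hv (leqnn (size A)) ANSWER [:: 1%N]; rewrite /final_dds hA.
case: S hv => [|S] hv h.
  by rewrite exp0n ?muln_gt0 // in h; apply: degle_mono h.
by apply: degle_mono h; rewrite leq_pexp2l // leq_mul2l -hA hs.
Qed.

End Alg.

End PartG.
Import PartG.

Module PartH.
Set Implicit Arguments. Unset Strict Implicit. Unset Printing Implicit Defensive.

Section Part.
Context (R : realType) d (Omega : measurableType d) (P : probability Omega R)
  (U : finType) (vec : Omega -> U).
Hypothesis mA : forall u, measurable [set w | vec w = u]%classic.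

Lemma part_meas (s : seq U) : measurable [set w | vec w \in s]%classic.
Proof.
elim: s => [|u s IH].
  by have -> : [set w | vec w \in [::]]%classic = set0 by apply/seteqP; split=> w.
have -> : [set w | vec w \in u :: s]%classic =
    ([set w | vec w = u] `|` [set w | vec w \in s])%classic.
  apply/seteqP; split=> w /=; rewrite in_cons.
    by move=> /orP [/eqP ->|h]; [left | right].
  by move=> [->|h]; [rewrite eqxx | rewrite h orbT].
exact: measurableU.
Qed.

Lemma part_measure (s : seq U) : uniq s ->
  P [set w | vec w \in s]%classic = (\sum_(u <- s) P [set w | vec w = u]%classic)%E.
Proof.
elim: s => [|u s IH] /=.
  move=> _; rewrite big_nil.
  by have -> : [set w | vec w \in [::]]%classic = set0 by apply/seteqP; split=> w.
move=> /andP [nu us].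
have -> : [set w | vec w \in u :: s]%classic =
    ([set w | vec w = u] `|` [set w | vec w \in s])%classic.
  apply/seteqP; split=> w /=; rewrite in_cons.
    by move=> /orP [/eqP ->|h]; [left | right].
  by move=> [->|h]; [rewrite eqxx | rewrite h orbT].
rewrite measureU //; first by rewrite big_cons; congr (_ + _)%E; exact: IH.
  exact: part_meas.
apply/seteqP; split=> w //= [e h]; move: h; rewrite e => h.
by rewrite h in nu.
Qed.

End Part.

End PartH.
Import PartH.

Module PartI.
Set Implicit Arguments. Unset Strict Implicit. Unset Printing Implicit Defensive.

Section Main.
Variables (R : realType) (N : nat) (g : ('I_N -> bool) -> bool)
    (S nR : nat) (d : measure_display) (Omega : measurableType d)
    (P : probability Omega R) (alg : Omega -> det_alg).
Local Notation X := ('I_N -> bool).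
Local Notation FF := {ffun 'I_N -> bool}.
Hypothesis hv : forall w, valid_alg S N (alg w).
Hypothesis hE : forall x : X,
  measurable [set w : Omega | outputs S (alg w) x (g x)]%classic /\
  (P [set w : Omega | outputs S (alg w) x (g x)]%classic >= (1 - 3^-1)%:E)%E.
Variable w0 : Omega.
Hypothesis hsz : forall w, (size (alg w) <= nR)%N.

Definition xf (y : FF) : X := fun i => y i.
Definition Ey (y : FF) := [set w : Omega | outputs S (alg w) (xf y) (g (xf y))]%classic.
Definition corr w (y : FF) : bool := `[< outputs S (alg w) (xf y) (g (xf y)) >].
Definition vec w : {ffun FF -> bool} := [ffun y => corr w y].
Local Notation U := {ffun FF -> bool}.

Lemma mAs (u : U) (s : seq FF) :
  measurable [set w | all (fun y => corr w y == u y) s]%classic.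
Proof.
elim: s => [|y s IH]; first by have -> : [set w | all (fun y => corr w y == u y) [::]]%classic = setT
  by apply/seteqP; split.
have -> : [set w | all (fun y => corr w y == u y) (y :: s)]%classic =
  ((if u y then Ey y else ~` Ey y) `&` [set w | all (fun y => corr w y == u y) s])%classic.
  apply/seteqP; split=> w /=.
    move=> /andP [/eqP h1 h2]; split=> //; rewrite -h1 /corr /Ey.
    by case: asboolP.
  move=> [h1 h2]; rewrite h2 andbT /corr; apply/eqP.
  by move: h1; case: (u y); case: asboolP.
apply: measurableI => //; case: (u y); first exact: (hE (xf y)).1.
by apply: measurableC; exact: (hE (xf y)).1.
Qed.

Lemma mA (u : U) : measurable [set w | vec w = u]%classic.
Proof.
have -> : [set w | vec w = u]%classic = [set w | all (fun y => corr w y == u y) (enum FF)]%classic.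
  apply/seteqP; split=> w /=.
    by move=> <-; apply/allP => y _; rewrite ffunE.
  by move=> /allP h; apply/ffunP => y; rewrite ffunE; apply/eqP; apply: h; rewrite mem_enum.
exact: mAs.
Qed.

Definition Pr (u : U) : R := fine (P [set w | vec w = u]%classic).

Lemma PrE u : P [set w | vec w = u]%classic = (Pr u)%:E.
Proof. by rewrite /Pr fineK // fin_num_measure //; exact: mA. Qed.

Lemma Pr_ge0 u : (0 <= Pr u)%R.
Proof. by rewrite /Pr fine_ge0 // measure_ge0. Qed.

Lemma sum_Pr_filter (Q : pred U) :
  P [set w | Q (vec w)]%classic = (\sum_(u <- enum U | Q u) Pr u)%:E.
Proof.
have -> : [set w | Q (vec w)]%classic = [set w | vec w \in seq.filter Q (enum U)]%classic.
  by apply/seteqP; split=> w /=; rewrite mem_filter mem_enum andbT.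
rewrite part_measure; last by rewrite filter_uniq // enum_uniq.
  by rewrite -sumEFin big_filter; apply: eq_bigr => u _; rewrite PrE.
exact: mA.
Qed.

Lemma sum_Pr : (\sum_(u <- enum U) Pr u = 1)%R.
Proof.
have := sum_Pr_filter xpredT.
have -> : [set w | xpredT (vec w)]%classic = setT by apply/seteqP; split.
by rewrite probability_setT big_filter => /eqP; rewrite eqe => /eqP <-.
Qed.

Lemma sum_Pr_good (y : FF) : (1 - 3^-1 <= \sum_(u <- enum U | u y) Pr u)%R.
Proof.
have := sum_Pr_filter (fun u => u y).
have -> : [set w | vec w y]%classic = Ey y.
  by apply/seteqP; split=> w /=; rewrite ffunE /corr => /asboolP.
move=> h; have := (hE (xf y)).2; rewrite /Ey in h; rewrite h lee_fin //.
Qed.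

Definition w_of (u : U) : Omega :=
  match pselect (exists w, vec w = u) with
  | left h => projT1 (cid h)
  | right _ => w0
  end.

Lemma w_of_spec u : Pr u != 0%R -> vec (w_of u) = u.
Proof.
rewrite /w_of; case: pselect => [h|h] hP; first by case: (cid h).
exfalso; move: hP; rewrite /Pr.
have -> : [set w | vec w = u]%classic = set0.
  by apply/seteqP; split=> w //= hw; apply: h; exists w.
by rewrite measure0 /= eqxx.
Qed.

Definition q w (x : X) : R := ((final_dds S (alg w) x ANSWER == [:: 1%N]) : nat)%:R.

Definition ff (x : X) : R := \sum_(u <- enum U) Pr u * q (w_of u) x.

Lemma ff_degle : @degle R N (S ^ (2 * nR)) ff.
Proof.
apply: degle_sum => u _; apply: degle_scale.
exact: final_degle.
Qed.

Lemma q01 w x : q w x = 0%R \/ q w x = 1%R.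
Proof. by rewrite /q; case: (_ == _); [right | left]. Qed.

Lemma ff_approx (x : X) : (`| ff x - (g x)%:R | <= 3^-1)%R.
Proof.
pose y : FF := [ffun i => x i].
have xy : xf y = x by apply: funext => i; rewrite /xf ffunE.
have -> : (ff x - (g x)%:R = \sum_(u <- enum U) Pr u * (q (w_of u) x - (g x)%:R))%R.
  rewrite /ff.
  under [in RHS]eq_bigr do rewrite mulrBr.
  by rewrite sumrB -big_distrl /= sum_Pr mul1r.
rewrite (bigID (fun u : U => u y)) /=.
rewrite big1 ?add0r; last first.
  move=> u hu; have [->|hP] := eqVneq (Pr u) 0%R; first by rewrite mul0r.
  have hv' := w_of_spec hP.
  have : corr (w_of u) y by rewrite -hv' ffunE in hu.
  rewrite /corr xy => /asboolP hout.
  rewrite /q /final_dds.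
  have := hout ANSWER; rewrite /final_dds eqxx => ->.
  by case: (g x); rewrite ?subrr ?mulr0.
have hsum := sum_Pr.
rewrite (bigID (fun u : U => u y)) /= in hsum.
have hgood := sum_Pr_good y.
apply: le_trans (ler_norm_sum _ _ _) _.
have hb : (\sum_(u <- enum U | ~~ u y) `|Pr u * (q (w_of u) x - (g x)%:R)|
   <= \sum_(u <- enum U | ~~ u y) Pr u)%R.
  apply: ler_sum => u _; rewrite normrM ger0_norm ?Pr_ge0 //.
  rewrite -[X in (_ <= X)%R]mulr1; apply: ler_wpM2l; first exact: Pr_ge0.
  by case: (q01 (w_of u) x) => ->; case: (g x) => /=; rewrite ?mulr1n ?mulr0n ler_norml; apply/andP; split; lra.
apply: le_trans hb _.
lra.
Qed.

End Main.

End PartI.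
Import PartI.

Unset Implicit Arguments. Set Strict Implicit. Set Printing Implicit Defensive.

Theorem theorem3p4 (R : realType) (N : nat) (g : ('I_N -> bool) -> bool)
    (S nR : nat) (d : measure_display) (Omega : measurableType d)
    (P : probability Omega R) (alg : Omega -> det_alg) :
  rand_alg_rounds alg nR ->
  rand_computes P S alg g (3^-1 : R) ->
  approx_deg_le R g (S ^ (2 * nR)).
Proof.
move=> [hsz [w0 _]] [hv hE].
have [p [hp ep]] := ff_degle g P hv w0 hsz.
exists p; split=> // x.
have e := ep x; rewrite /ev in e; rewrite e.
exact: (ff_approx hE w0 x).
Qed.
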